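(* Let $n\ge2$. For $s=1,\dots,n-1$, $$(1+\mathfrak p_n)^*\cap(1+\mathfrak a_{n,s})^*=\Big(1+\sum_{|I|=s,\ n\in I}\mathfrak p_I\Big)^*,$$ and $(1+\mathfrak p_n)^*\cap(1+\mathfrak a_{n,n})^*=(1+F_n)^*$.
   Context: $K$ is a field. $\mathbb S_n$ is the $K$-algebra generated by $x_1,\dots,x_n,y_1,\dots,y_n$ with relations $y_ix_i=1$ and $[x_i,y_j]=[x_i,x_j]=[y_i,y_j]=0$ ($i\ne j$). $e_i:=1-x_iy_i$; $\mathfrak p_i$ is the ideal of $\mathbb S_n$ generated by $e_i$; for $I\subseteq\{1,\dots,n\}$, $\mathfrak p_I:=\prod_{i\in I}\mathfrak p_i$ (which equals $\bigcap_{i\in I}\mathfrak p_i$); $\mathfrak a_{n,s}:=\sum_{|I|=s}\mathfrak p_I$ for $1\le s\le n$; $F_n:=\mathfrak p_{\{1,\dots,n\}}=\mathfrak a_{n,n}$. For a proper ideal $\mathfrak b$ of $\mathbb S_n$, $(1+\mathfrak b)^*$ denotes the group of units of $\mathbb S_n$ lying in $1+\mathfrak b$. *)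

(* Defs.v *)
(* The Jacobian algebra S_n is built literally as the
   K-algebra given by generators and relations: the quotient of the
   type of formal algebra expressions in x_i, y_i (i : 'I_n) with scalar
   constants from K, by the congruence generated by the K-algebra axioms
   and the defining relations.  Elements of S_n are represented by terms;
   equality in S_n is the congruence [eqS]. *)
From HB Require Import structures.
From mathcomp Require Import all_boot all_order all_algebra.
Set Implicit Arguments. Unset Strict Implicit. Unset Printing Implicit Defensive.
Import GRing.Theory.
Local Open Scope ring_scope.

Section Jacobian.
Variables (K : fieldType) (n : nat).

Inductive term : Type :=
| tC : K -> term
| tX : 'I_n -> term
| tY : 'I_n -> term
| tAdd : term -> term -> term
| tMul : term -> term -> term.

Definition tSub (a b : term) : term := tAdd a (tMul (tC (-1)) b).

Inductive eqS : term -> term -> Prop :=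
| eqS_refl a : eqS a a
| eqS_sym a b : eqS a b -> eqS b a
| eqS_trans a b c : eqS a b -> eqS b c -> eqS a c
| eqS_add a a' b b' : eqS a a' -> eqS b b' -> eqS (tAdd a b) (tAdd a' b')
| eqS_mul a a' b b' : eqS a a' -> eqS b b' -> eqS (tMul a b) (tMul a' b')
| eqS_addA a b c : eqS (tAdd a (tAdd b c)) (tAdd (tAdd a b) c)
| eqS_addC a b : eqS (tAdd a b) (tAdd b a)
| eqS_add0 a : eqS (tAdd (tC 0) a) a
| eqS_addN a : eqS (tAdd a (tMul (tC (-1)) a)) (tC 0)
| eqS_mulA a b c : eqS (tMul a (tMul b c)) (tMul (tMul a b) c)
| eqS_mul1l a : eqS (tMul (tC 1) a) a
| eqS_mul1r a : eqS (tMul a (tC 1)) a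
| eqS_mulDl a b c : eqS (tMul (tAdd a b) c) (tAdd (tMul a c) (tMul b c))
| eqS_mulDr a b c : eqS (tMul a (tAdd b c)) (tAdd (tMul a b) (tMul a c))
| eqS_Cadd c d : eqS (tAdd (tC c) (tC d)) (tC (c + d))
| eqS_Cmul c d : eqS (tMul (tC c) (tC d)) (tC (c * d))
| eqS_Ccentral c a : eqS (tMul (tC c) a) (tMul a (tC c))
| eqS_yx i : eqS (tMul (tY i) (tX i)) (tC 1)
| eqS_xy i j : i != j -> eqS (tMul (tX i) (tY j)) (tMul (tY j) (tX i))
| eqS_xx i j : i != j -> eqS (tMul (tX i) (tX j)) (tMul (tX j) (tX i))
| eqS_yy i j : i != j -> eqS (tMul (tY i) (tY j)) (tMul (tY j) (tY i)).

Inductive idealGen (G : term -> Prop) : term -> Prop :=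
| iG_gen a : G a -> idealGen G a
| iG_0 : idealGen G (tC 0)
| iG_add a b : idealGen G a -> idealGen G b -> idealGen G (tAdd a b)
| iG_mull r a : idealGen G a -> idealGen G (tMul r a)
| iG_mulr a r : idealGen G a -> idealGen G (tMul a r)
| iG_eq a b : eqS a b -> idealGen G a -> idealGen G b.

Definition idealMul (A B : term -> Prop) : term -> Prop :=
  idealGen (fun t => exists a b, [/\ A a, B b & t = tMul a b]).

Definition e_ (i : 'I_n) : term := tSub (tC 1) (tMul (tX i) (tY i)).

Definition p_ (i : 'I_n) : term -> Prop := idealGen (fun t => t = e_ i).

Definition p_I (I : {set 'I_n}) : term -> Prop :=
  foldr (fun i A => idealMul (p_ i) A) (fun _ => True) (enum I).

Definition a_ns (s : nat) : term -> Prop :=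
  idealGen (fun t => exists I : {set 'I_n}, #|I| = s /\ p_I I t).

Definition a_ns_with (s : nat) (i0 : 'I_n) : term -> Prop :=
  idealGen (fun t => exists I : {set 'I_n}, [/\ #|I| = s, i0 \in I & p_I I t]).

Definition F_n : term -> Prop := p_I [set: 'I_n].

Definition unitS (u : term) : Prop :=
  exists v, eqS (tMul u v) (tC 1) /\ eqS (tMul v u) (tC 1).

Definition in1plus_units (b : term -> Prop) (u : term) : Prop :=
  unitS u /\ b (tSub u (tC 1)).

End Jacobian.

(* Main.v *)
Require Import Defs.
From HB Require Import structures.
From mathcomp Require Import all_boot all_order all_algebra.
From Stdlib Require Import Setoid Morphisms Lia.
Set Implicit Arguments. Unset Strict Implicit. Unset Printing Implicit Defensive.
Import GRing.Theory.

Section S.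
Variables (K : fieldType) (n : nat).
Local Notation T := (term K n).
Local Notation "a =S b" := (@eqS K n a b) (at level 70).
Local Notation C c := (tC n c).
Local Notation X i := (tX K i).
Local Notation Y i := (tY K i).
Local Notation E i := (e_ K i).

Global Instance eqS_Equiv : Equivalence (@eqS K n).
Proof. split; [exact: eqS_refl | exact: eqS_sym | exact: eqS_trans]. Qed.
Global Instance tAdd_Proper : Proper (@eqS K n ==> @eqS K n ==> @eqS K n) (@tAdd K n).
Proof. move=> a a' Ha b b' Hb; exact: eqS_add. Qed.
Global Instance tMul_Proper : Proper (@eqS K n ==> @eqS K n ==> @eqS K n) (@tMul K n).
Proof. move=> a a' Ha b b' Hb; exact: eqS_mul. Qed.

Lemma addr0S (a : T) : tAdd a (C 0%R) =S a.
Proof. rewrite eqS_addC eqS_add0; reflexivity. Qed.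

Lemma self0 (b : T) : tAdd b b =S b -> b =S C 0%R.
Proof.
move=> H.
transitivity (tAdd b (tAdd b (tMul (C (-1)%R) b))).
  rewrite eqS_addN addr0S; reflexivity.
rewrite eqS_addA H eqS_addN; reflexivity.
Qed.

Lemma mul0l (a : T) : tMul (C 0%R) a =S C 0%R.
Proof.
apply: self0; rewrite -eqS_mulDl eqS_Cadd addr0. reflexivity.
Qed.

Lemma mul0r (a : T) : tMul a (C 0%R) =S C 0%R.
Proof. rewrite -eqS_Ccentral mul0l; reflexivity. Qed.

Lemma mulCr (a b : T) c : tMul a (tMul (C c) b) =S tMul (C c) (tMul a b).
Proof. rewrite eqS_mulA -eqS_Ccentral -eqS_mulA; reflexivity. Qed.


Record ideal (P : T -> Prop) : Prop := Ideal {
  i0 : P (C 0%R);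
  iadd : forall a b, P a -> P b -> P (tAdd a b);
  imull : forall r a, P a -> P (tMul r a);
  imulr : forall a r, P a -> P (tMul a r);
  ieq : forall a b, a =S b -> P a -> P b }.

Lemma idealGen_ideal (G : T -> Prop) : ideal (idealGen G).
Proof.
split; [exact: iG_0 | exact: iG_add | exact: iG_mull | exact: iG_mulr | exact: iG_eq].
Qed.

Lemma True_ideal : ideal (fun _ : T => True).
Proof. by split. Qed.

Lemma idealGen_min (G P : T -> Prop) : ideal P -> (forall a, G a -> P a) ->
  forall t, idealGen G t -> P t.
Proof.
move=> [H0 Ha Hl Hr He] HG t; elim=> //; eauto.
Qed.

Lemma idealMul_l (A B : T -> Prop) t : ideal A -> idealMul A B t -> A t.
Proof.
move=> HA; apply: idealGen_min => // a [x [y [Hx Hy ->]]]; exact: imulr.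
Qed.

Lemma idealMul_r (A B : T -> Prop) t : ideal B -> idealMul A B t -> B t.
Proof.
move=> HB; apply: idealGen_min => // a [x [y [Hx Hy ->]]]; exact: imull.
Qed.

Fixpoint pw (a : T) (k : nat) : T := if k is k'.+1 then tMul (pw a k') a else C 1%R.

Lemma pwD (a : T) m k : pw a (m + k) =S tMul (pw a m) (pw a k).
Proof.
elim: k => [|k IH]; first by rewrite addn0 /= eqS_mul1r; reflexivity.
rewrite addnS /= IH eqS_mulA; reflexivity.
Qed.

Lemma pw_comm (y a : T) N : tMul a y =S tMul y a -> tMul (pw y N) a =S tMul a (pw y N).
Proof.
move=> H; elim: N => [|N IH] /=; first by rewrite eqS_mul1l eqS_mul1r; reflexivity.
rewrite -eqS_mulA -H eqS_mulA IH -eqS_mulA; reflexivity.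
Qed.

Lemma dlemma (i : 'I_n) (r : T) : exists d, forall N, exists r',
  tMul (pw (Y i) (N + d)) r =S tMul r' (pw (Y i) N).
Proof.
elim: r => [c|j|j|r1 [d1 H1] r2 [d2 H2]|r1 [d1 H1] r2 [d2 H2]].
- exists 0%N => N; exists (C c); rewrite addn0 eqS_Ccentral; reflexivity.
- case: (eqVneq j i) => [->|ne].
    exists 1%N => N; exists (C 1%R); rewrite addn1 /= -eqS_mulA eqS_yx eqS_mul1r eqS_mul1l; reflexivity.
  exists 0%N => N; exists (X j); rewrite addn0; apply: pw_comm; exact: eqS_xy.
- case: (eqVneq j i) => [->|ne].
    exists 0%N => N; exists (Y i); rewrite addn0; apply: pw_comm; reflexivity.
  exists 0%N => N; exists (Y j); rewrite addn0; apply: pw_comm; exact: eqS_yy.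
- exists (d1 + d2)%N => N.
  have [r1' E1] := H1 (d2 + N)%N; have [r2' E2] := H2 (d1 + N)%N.
  exists (tAdd (tMul r1' (pw (Y i) d2)) (tMul r2' (pw (Y i) d1))).
  rewrite eqS_mulDr eqS_mulDl.
  have -> : (N + (d1 + d2) = (d2 + N) + d1)%N by rewrite -!plusE; lia.
  rewrite E1.
  have -> : ((d2 + N) + d1 = (d1 + N) + d2)%N by rewrite -!plusE; lia.
  rewrite E2 !pwD -!eqS_mulA; reflexivity.
- exists (d1 + d2)%N => N.
  have [r2' E2] := H2 N; have [r1' E1] := H1 (N + d2)%N.
  exists (tMul r1' r2').
  have -> : (N + (d1 + d2) = (N + d2) + d1)%N by rewrite -!plusE; lia.
  rewrite eqS_mulA E1 -eqS_mulA E2 eqS_mulA; reflexivity.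
Qed.


Lemma onesplit (i : 'I_n) : tAdd (E i) (tMul (X i) (Y i)) =S C 1%R.
Proof.
rewrite /e_ /tSub -eqS_addA [tAdd (tMul (C _) _) _]eqS_addC eqS_addN addr0S; reflexivity.
Qed.

Lemma ye0 (i : 'I_n) : tMul (Y i) (E i) =S C 0%R.
Proof.
rewrite /e_ /tSub eqS_mulDr eqS_mul1r mulCr (eqS_mulA (Y i) (X i)) eqS_yx eqS_mul1l eqS_addN; reflexivity.
Qed.

Lemma annih (i : 'I_n) t : p_ i t -> exists N, tMul (pw (Y i) N) t =S C 0%R.
Proof.
elim.
- move=> a ->; exists 1%N => /=; rewrite eqS_mul1l ye0; reflexivity.
- exists 0%N; rewrite mul0r; reflexivity.
- move=> a b _ [N1 H1] _ [N2 H2]; exists (N2 + N1)%N.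
  have Ea : tMul (pw (Y i) (N2 + N1)) a =S C 0%R.
    rewrite pwD -eqS_mulA H1 mul0r; reflexivity.
  have Eb : tMul (pw (Y i) (N2 + N1)) b =S C 0%R.
    rewrite addnC pwD -eqS_mulA H2 mul0r; reflexivity.
  rewrite eqS_mulDr Ea Eb addr0S; reflexivity.
- move=> r a _ [N H]; have [d Hd] := dlemma i r; have [r' E'] := Hd N.
  exists (N + d)%N; rewrite eqS_mulA E' -eqS_mulA H mul0r; reflexivity.
- move=> a r _ [N H]; exists N; rewrite eqS_mulA H mul0l; reflexivity.
- move=> a b Hab _ [N H]; exists N; rewrite -Hab; exact: H.
Qed.

Lemma keylemma (i : 'I_n) (P : T -> Prop) : ideal P -> forall N t,
  (forall r, P (tMul (E i) (tMul r t))) -> tMul (pw (Y i) N) t =S C 0%R -> P t.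
Proof.
move=> HP; elim=> [|N IH] t H Ht /=.
  apply: (ieq HP) (i0 HP); rewrite -Ht eqS_mul1l; reflexivity.
have Hyt : P (tMul (Y i) t).
  apply: IH.
    move=> r; apply: (ieq HP) (H (tMul r (Y i))); rewrite -eqS_mulA; reflexivity.
  rewrite eqS_mulA; exact: Ht.
apply: (ieq HP) (iadd HP (H (C 1%R)) (imull HP (X i) Hyt)).
rewrite (eqS_mul1l t) (eqS_mulA (X i) (Y i) t) -eqS_mulDl onesplit eqS_mul1l; reflexivity.
Qed.

Lemma inter (j : 'I_n) (B : T -> Prop) t : ideal B -> p_ j t -> B t ->
  idealMul (p_ j) B t.
Proof.
move=> HB Hj Ht; have [N HN] := annih Hj.
apply: (keylemma (idealGen_ideal _)) HN => r.
apply: iG_gen; exists (E j), (tMul r t); split => //.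
  exact: iG_gen.
exact: imull.
Qed.

Lemma foldr_ideal (l : seq 'I_n) :
  ideal (foldr (fun i A => idealMul (p_ i) A) (fun _ : T => True) l).
Proof. case: l => [|j l] /=; [exact: True_ideal | exact: idealGen_ideal]. Qed.

Lemma foldr_char (l : seq 'I_n) (t : T) :
  foldr (fun i A => idealMul (p_ i) A) (fun _ : T => True) l t <->
  (forall j, j \in l -> p_ j t).
Proof.
elim: l => [|j l IH] /=; first by split.
split.
  move=> H k; rewrite inE => /predU1P [->|kl].
    exact: (idealMul_l (idealGen_ideal _) H).
  exact: (proj1 IH (idealMul_r (foldr_ideal l) H) k kl).
move=> H; apply: inter; first exact: foldr_ideal.
  by apply: H; rewrite inE eqxx.
by apply: (proj2 IH) => k kl; apply: H; rewrite inE kl orbT.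
Qed.

Lemma pI_char (I : {set 'I_n}) (t : T) : p_I I t <-> (forall j, j \in I -> p_ j t).
Proof.
rewrite /p_I; split=> H.
  by move=> j jI; apply: (proj1 (foldr_char _ _) H); rewrite mem_enum.
by apply: (proj2 (foldr_char _ _)) => j; rewrite mem_enum; exact: H.
Qed.

Lemma pI_ideal (I : {set 'I_n}) : ideal (p_I I).
Proof. exact: foldr_ideal. Qed.


Lemma p_ideal (j : 'I_n) : ideal (p_ j).
Proof. exact: idealGen_ideal. Qed.

Lemma ens (s : nat) (i : 'I_n) : (1 <= s)%N -> forall t : T, a_ns s t ->
  forall r, a_ns_with s i (tMul (E i) (tMul r t)).
Proof.
move=> s1 t; rewrite /a_ns_with; elim.
- move=> a [I [cI HI]] r.
  case iI: (i \in I).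
    apply: iG_mull; apply: iG_mull; apply: iG_gen; exists I; split=> //; exact: iI.
  have [j jI] : exists j, j \in I.
    by apply/set0Pn; rewrite -card_gt0 cI.
  apply: iG_gen; exists (i |: (I :\ j)); split.
  - rewrite cardsU1 !inE iI andbF /= add1n.
    by move: cI; rewrite (cardsD1 j I) jI add1n => <-.
  - by rewrite setU11.
  - apply/pI_char => k; rewrite !inE => /orP [/eqP ->|/andP [_ kI]].
      apply: (imulr (p_ideal i)); exact: iG_gen.
    apply: (imull (p_ideal k)); apply: (imull (p_ideal k)); exact: (proj1 (pI_char I a) HI k kI).
- move=> r; apply: (ieq (idealGen_ideal _)) (iG_0 _).
  rewrite mul0r mul0r; reflexivity.
- move=> a b _ Ha _ Hb r.
  apply: (ieq (idealGen_ideal _)) (iG_add (Ha r) (Hb r)).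
  rewrite -eqS_mulDr -eqS_mulDr; reflexivity.
- move=> r0 a _ H r.
  apply: (ieq (idealGen_ideal _)) (H (tMul r r0)).
  rewrite (eqS_mulA r r0 a); reflexivity.
- move=> a r0 _ H r.
  apply: (ieq (idealGen_ideal _)) (iG_mulr r0 (H r)).
  rewrite -!eqS_mulA; reflexivity.
- move=> a b Hab _ H r.
  apply: (ieq (idealGen_ideal _)) (H r).
  rewrite Hab; reflexivity.
Qed.

End S.

Theorem lemma3p1 (K : fieldType) (n : nat) (hn : 2 <= n) (i : 'I_n)
    (hi : val i = n.-1) :
  (forall s : nat, 1 <= s <= n.-1 ->
     forall u : term K n,
       (in1plus_units (p_ i) u /\ in1plus_units (a_ns s) u)
       <-> in1plus_units (a_ns_with s i) u)
  /\
  (forall u : term K n,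
     (in1plus_units (p_ i) u /\ in1plus_units (a_ns n) u)
     <-> in1plus_units (@F_n K n) u).
Proof.
split.
  move=> s /andP [s1 _] u; split.
    move=> [[Hu Hp] [_ Ha]]; split=> //.
    have [N HN] := annih Hp.
    apply: (keylemma (@idealGen_ideal K n _)) HN => r.
    exact: ens.
  move=> [Hu Hw]; split; split=> //.
    refine (idealGen_min (@p_ideal K n i) _ Hw) => a [I [_ iI HI]].
    exact: (proj1 (pI_char I a) HI i iI).
  refine (idealGen_min (@idealGen_ideal K n _) _ Hw) => a [I [cI _ HI]].
  by apply: iG_gen; exists I.
move=> u; split.
  move=> [_ [Hu Ha]]; split=> //.
  refine (idealGen_min (@pI_ideal K n _) _ Ha) => a [I [cI HI]].
  apply/pI_char => j _; apply: (proj1 (pI_char I a) HI j).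
  have -> : I = setT by apply/eqP; rewrite eqEcard subsetT cardsT card_ord cI leqnn.
  by rewrite inE.
move=> [Hu HF]; split; split=> //.
  by apply: (proj1 (pI_char _ _) HF i); rewrite inE.
apply: iG_gen; exists setT; split=> //; by rewrite cardsT card_ord.
Qed.
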